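(* There is an absolute constant $C>0$ such that for every integer $N\ge2$, every Hilbert space $\mathcal{H}$ of dimension $N$ with orthonormal basis $e_0,\dots,e_{N-1}$, every $K\in\mathcal{D}(\mathbb{T})$ and every $e\in\mathcal{H}$, \[ \sum_{I\in\mathcal{D}(K)}|\langle\omega_I,e\rangle_{\mathcal{H}}|^2\,|I|\le C|K|\,\|e\|_{\mathcal{H}}^2 , \] where the vectors $\omega_I$ are defined as follows.
   Context: $\mathbb{T}$ is identified with $[0,1)$ via $x\mapsto e^{2\pi ix}$; $\mathcal{D}(\mathbb{T})$ is the set of dyadic intervals $[2^{-j}k,2^{-j}(k+1))\subset[0,1)$, $j\ge0$, and $\mathcal{D}(K)$ the dyadic subintervals of $K$. For such $I$, $|I|$ is its length, $C_I$ its center, and $\mathrm{rk}(I)=-\log_2|I|$. Let $a_m=\frac{1}{m(\log N)^{1/2}}$ for $1\le m\le N$. For $I\in\mathcal{D}(\mathbb{T})$ with $\mathrm{rk}(I)=j\in[1,N]$, set $\omega_I=\sum_{l=0}^{j-1}a_{j-l}\,e^{2\pi i2^lC_I}e_l$; for other ranks $\omega_I=0$. *)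

(* Defs.v *)
From Stdlib Require Import Reals.
From Coquelicot Require Import Coquelicot.
Open Scope R_scope.

Fixpoint rsum (a n : nat) (f : nat -> R) : R :=
  match n with O => 0 | S n' => rsum a n' f + f (a + n')%nat end.

Fixpoint csum (n : nat) (f : nat -> C) : C :=
  match n with O => RtoC 0 | S n' => Cplus (csum n' f) (f n') end.

Definition expi (x : R) : C := (cos (2 * PI * x), sin (2 * PI * x)).

(* The Hilbert space H of dimension N with orthonormal basis e_0..e_{N-1}
   is represented in coordinates: a vector is v : nat -> C, of which only the
   coordinates v 0, ..., v (N-1) matter. *)
Definition inner (N : nat) (v w : nat -> C) : C :=
  csum N (fun l => Cmult (v l) (Cconj (w l))).
Definition norm2 (N : nat) (v : nat -> C) : R :=
  rsum 0 N (fun l => (Cmod (v l))^2).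

Definition a_coef (N m : nat) : R := / (INR m * sqrt (ln (INR N))).

(* Dyadic interval I = [2^-j k, 2^-j (k+1)), k < 2^j: rank j, length 2^-j,
   center C_I = 2^-j (k + 1/2). *)
Definition dlen (j : nat) : R := / 2 ^ j.
Definition dcenter (j k : nat) : R := (INR k + / 2) / 2 ^ j.

Definition omega (N j k : nat) : nat -> C := fun l =>
  if ((1 <=? j) && (j <=? N) && (l <? j))%bool
  then Cmult (RtoC (a_coef N (j - l))) (expi (2 ^ l * dcenter j k))
  else RtoC 0.

(* sum over I in D(K) with rank(I) < rank(K) + M, where K = (j0,k0):
   the dyadic subintervals of K of rank j are (j,k) with
   k0 2^(j-j0) <= k < (k0+1) 2^(j-j0). *)
Definition carleson_partial (N j0 k0 M : nat) (e : nat -> C) : R :=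
  rsum j0 M (fun j =>
    rsum (k0 * 2 ^ (j - j0)) (2 ^ (j - j0)) (fun k =>
      (Cmod (inner N (omega N j k) e))^2 * dlen j)).

(* Main.v *)
Require Import Defs.
From Stdlib Require Import Reals Lra Lia Psatz Arith Bool.
From Coquelicot Require Import Coquelicot.
Open Scope R_scope.

Lemma rsum_ext_in a n f g : (forall i, (a <= i < a + n)%nat -> f i = g i) ->
  rsum a n f = rsum a n g.
Proof. induction n; simpl; intros H; auto. rewrite IHn; [|intros; apply H; lia].
  rewrite (H (a+n)%nat); [auto|lia]. Qed.

Lemma rsum_le_in a n f g : (forall i, (a <= i < a + n)%nat -> f i <= g i) ->
  rsum a n f <= rsum a n g.
Proof. induction n; simpl; intros H; [lra|]. 
  assert (rsum a n f <= rsum a n g) by (apply IHn; intros; apply H; lia).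
  assert (f (a+n)%nat <= g (a+n)%nat) by (apply H; lia). lra. Qed.

Lemma rsum_nonneg a n f : (forall i, (a <= i < a + n)%nat -> 0 <= f i) -> 0 <= rsum a n f.
Proof. intros H. replace 0 with (rsum a n (fun _ => 0)).
 apply rsum_le_in; auto. induction n; simpl; auto. rewrite IHn; [lra|intros; apply H; lia]. Qed.

Lemma rsum_plus a n f g : rsum a n (fun i => f i + g i) = rsum a n f + rsum a n g.
Proof. induction n; simpl; [lra|]. rewrite IHn; lra. Qed.

Lemma rsum_scal a n c f : rsum a n (fun i => c * f i) = c * rsum a n f.
Proof. induction n; simpl; [lra|]. rewrite IHn; lra. Qed.

Lemma rsum_split a n p f : rsum a (n + p) f = rsum a n f + rsum (a + n) p f.
Proof. induction p; simpl. rewrite Nat.add_0_r; lra.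
  rewrite Nat.add_succ_r; simpl. rewrite IHp. replace (a + (n+p))%nat with (a+n+p)%nat by lia. lra. Qed.

Lemma rsum_shift a n f : rsum a n f = rsum 0 n (fun i => f (a + i)%nat).
Proof. induction n; simpl; auto. rewrite IHn. reflexivity. Qed.

Lemma rsum_first a n f : rsum a (S n) f = f a + rsum (S a) n f.
Proof. induction n. simpl. rewrite Nat.add_0_r; lra.
 change (rsum a (S (S n)) f) with (rsum a (S n) f + f (a + S n)%nat).
 change (rsum (S a) (S n) f) with (rsum (S a) n f + f (S a + n)%nat).
 rewrite IHn. replace (a + S n)%nat with (S a + n)%nat by lia. lra. Qed.

Lemma rsum_zero a n f : (forall i, (a <= i < a + n)%nat -> f i = 0) -> rsum a n f = 0.
Proof. intros H. transitivity (rsum a n (fun _ => 0)). apply rsum_ext_in; auto.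
 clear H. induction n; simpl; auto. rewrite IHn; lra. Qed.

Lemma rsum_mono_n a n n' f : (n <= n')%nat -> (forall i, 0 <= f i) -> rsum a n f <= rsum a n' f.
Proof. intros H Hf. replace n' with (n + (n'-n))%nat by lia. rewrite rsum_split.
 assert (0 <= rsum (a+n) (n'-n) f) by (apply rsum_nonneg; auto). lra. Qed.

Lemma rsum_trunc a n n' f : (forall i, (a + n' <= i)%nat -> f i = 0) -> (forall i, 0 <= f i) ->
  rsum a n f <= rsum a n' f.
Proof. intros H0 H. destruct (le_lt_dec n n'). apply rsum_mono_n; auto.
 replace n with (n' + (n-n'))%nat by lia. rewrite rsum_split.
 rewrite (rsum_zero (a+n')); [lra|]. intros; apply H0; lia. Qed.

Lemma rsum_S a n f : rsum a (S n) f = rsum a n f + f (a+n)%nat.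
Proof. reflexivity. Qed.

Lemma rsum_CS p f g : (rsum 0 p (fun l => f l * g l))^2 <=
  rsum 0 p (fun l => f l ^2) * rsum 0 p (fun l => g l ^2).
Proof. induction p. simpl. lra.
 rewrite !rsum_S, !Nat.add_0_l.
 set (Sf := rsum 0 p (fun l => f l * g l)) in *.
 set (A := rsum 0 p (fun l => f l ^2)) in *.
 set (B := rsum 0 p (fun l => g l ^2)) in *.
 assert (HA : 0 <= A) by (apply rsum_nonneg; intros; apply pow2_ge_0).
 assert (HB : 0 <= B) by (apply rsum_nonneg; intros; apply pow2_ge_0).
 set (x := f p) in *. set (y := g p) in *.
 assert (h : (2*Sf*x*y)^2 <= (A*y^2+B*x^2)^2).
 { assert (0 <= x^2*y^2) by (apply Rmult_le_pos; apply pow2_ge_0). 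
   assert ((2*Sf*x*y)^2 = 4 * Sf^2 * (x^2*y^2)) by ring.
   assert ((A*y^2+B*x^2)^2 = (A*y^2-B*x^2)^2 + 4*(A*B)*(x^2*y^2)) by ring.
   assert (0 <= (A*B - Sf^2)*(x^2*y^2)) by (apply Rmult_le_pos; lra).
   assert (0 <= (A*y^2-B*x^2)^2) by apply pow2_ge_0.
   assert ((A*B - Sf^2)*(x^2*y^2) = A*B*(x^2*y^2) - Sf^2*(x^2*y^2)) by ring. lra. }
 assert (h2 : 2*Sf*x*y <= A*y^2+B*x^2).
 { assert (0 <= A*y^2+B*x^2) by (assert (0<=y^2) by apply pow2_ge_0; assert (0<=x^2) by apply pow2_ge_0; apply Rplus_le_le_0_compat; apply Rmult_le_pos; lra). set (u := 2*Sf*x*y) in *. set (v := A*y^2+B*x^2) in *.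
   destruct (Rle_lt_dec u v) as [|Hlt]; auto. assert (0 < (u-v)*(u+v)) by (apply Rmult_lt_0_compat; lra). nra. }
 assert (0 <= y^2) by apply pow2_ge_0. nra. Qed.

Lemma csum_ext_in n f g : (forall i, (i < n)%nat -> f i = g i) -> csum n f = csum n g.
Proof. induction n; simpl; intros H; auto. rewrite IHn; [|intros; apply H; lia].
  rewrite (H n); [auto|lia]. Qed.

Lemma csum_first n f : csum (S n) f = Cplus (f 0%nat) (csum n (fun l => f (S l))).
Proof. induction n. simpl. apply injective_projections; simpl; ring.
 change (csum (S (S n)) f) with (Cplus (csum (S n) f) (f (S n))).
 rewrite IHn. simpl. rewrite Cplus_assoc. reflexivity. Qed.

Lemma csum_split a m f : csum (a + m) f = Cplus (csum a f) (csum m (fun l => f (a + l)%nat)).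
Proof. induction m. simpl. rewrite Nat.add_0_r. apply injective_projections; simpl; ring.
 rewrite Nat.add_succ_r. simpl. rewrite IHm, Cplus_assoc. reflexivity. Qed.

Lemma csum_zero n f : (forall i, (i < n)%nat -> f i = RtoC 0) -> csum n f = RtoC 0.
Proof. induction n; simpl; intros H; auto. rewrite IHn; [|intros; apply H; lia].
  rewrite (H n); [|lia]. apply injective_projections; simpl; ring. Qed.

Lemma csum_trunc n j f : (j <= n)%nat -> (forall i, (j <= i < n)%nat -> f i = RtoC 0) -> csum n f = csum j f.
Proof. intros Hj H. replace n with (j + (n - j))%nat by lia. rewrite csum_split.
 rewrite (csum_zero (n-j)); [|intros; apply H; lia]. apply injective_projections; simpl; ring. Qed.

Lemma Cmod_csum_le n f : Cmod (csum n f) <= rsum 0 n (fun l => Cmod (f l)).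
Proof. induction n; simpl. rewrite Cmod_0; lra.
 eapply Rle_trans. apply Cmod_triangle. lra. Qed.

Lemma Cmod_sq z : Cmod z ^ 2 = fst z ^ 2 + snd z ^ 2.
Proof. apply Cmod2_alt. Qed.

Lemma Cmod_expi x : Cmod (expi x) = 1.
Proof. assert (Cmod (expi x) ^2 = 1). rewrite Cmod_sq. unfold expi; simpl.
 pose proof (sin2_cos2 (2*PI*x)) as Hsc. unfold Rsqr in Hsc. lra.
 assert (0 <= Cmod (expi x)) by apply Cmod_ge_0. nra. Qed.

Lemma expi_half x : expi (x + /2) = Copp (expi x).
Proof. unfold expi, Copp. replace (2 * PI * (x + /2)) with (2*PI*x + PI) by field.
 rewrite neg_cos, neg_sin. reflexivity. Qed.

Lemma expi_per x n : expi (x + INR n) = expi x.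
Proof. unfold expi. replace (2 * PI * (x + INR n)) with (2*PI*x + 2 * INR n * PI) by ring.
 rewrite cos_period, sin_period. reflexivity. Qed.

Lemma parallelogram x g : Cmod (Cplus x g)^2 + Cmod (Cplus (Copp x) g)^2 = 2 * Cmod g ^2 + 2 * Cmod x ^2.
Proof. rewrite !Cmod_sq. destruct x, g; simpl. ring. Qed.

Lemma Cmod_mult_expi b x : Cmod (Cmult b (expi x)) ^2 = Cmod b ^2.
Proof. rewrite Cmod_mult, Cmod_expi. ring. Qed.

Lemma INR_pow2 n : INR (2^n) = 2^n.
Proof. rewrite pow_INR. simpl. replace (1+1) with 2 by ring. reflexivity. Qed.

Lemma INR2 : INR 2 = 2.
Proof. simpl. ring. Qed.

Lemma parseval m : forall A b,
  rsum 0 (2^m) (fun r => Cmod (csum m (fun l => Cmult (b l)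
     (expi (2^l * ((INR (A*2^m + r)%nat + /2) / 2^m)))))^2)
  = 2^m * rsum 0 m (fun l => Cmod (b l)^2).
Proof. induction m; intros A b.
 - simpl. rewrite Cmod_0. simpl. ring.
 - assert (E : (2^(S m) = 2^m + 2^m)%nat) by (simpl; lia). rewrite E at 1.
   rewrite rsum_split, Nat.add_0_l. rewrite (rsum_shift (2^m)).
   rewrite <- rsum_plus.
   set (G := fun r => csum m (fun l => Cmult (b (S l))
     (expi (2^l * ((INR ((2*A)*2^m + r)%nat + /2) / 2^m))))).
   set (X := fun r => Cmult (b 0%nat) (expi (2^0 * ((INR (A*2^(S m) + r)%nat + /2) / 2^(S m))))).
   transitivity (rsum 0 (2^m) (fun r => 2 * Cmod (G r)^2 + 2 * Cmod (X r)^2)).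
   + apply rsum_ext_in. intros r _.
     rewrite <- parallelogram. f_equal; f_equal; f_equal; rewrite csum_first; f_equal.
     * unfold G. apply csum_ext_in. intros l _. f_equal. f_equal.
       rewrite !plus_INR, !mult_INR, !INR_pow2, ?INR2. simpl pow. field. apply pow_nonzero; lra.
     * unfold X. replace (2 ^ 0 * ((INR (A * 2 ^ S m + (2 ^ m + r)) + / 2) / 2 ^ S m)) with
       (2 ^ 0 * ((INR (A * 2 ^ S m + r) + / 2) / 2 ^ S m) + /2).
       rewrite expi_half. apply injective_projections; simpl; ring.
       rewrite !plus_INR, !mult_INR, !INR_pow2, ?INR2. simpl pow. field. apply pow_nonzero; lra.
     * unfold G. apply csum_ext_in. intros l _. f_equal.
       replace (2 ^ S l * ((INR (A * 2 ^ S m + (2 ^ m + r)) + / 2) / 2 ^ S m)) with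
       (2 ^ l * ((INR (2 * A * 2 ^ m + r) + / 2) / 2 ^ m) + INR (2^l)).
       apply expi_per.
       rewrite !plus_INR, !mult_INR, !INR_pow2, ?INR2. simpl pow. field. apply pow_nonzero; lra.
   + rewrite rsum_plus, !rsum_scal. unfold G. rewrite IHm.
     rewrite (rsum_ext_in 0 (2^m) (fun r => Cmod (X r)^2) (fun _ => Cmod (b 0%nat)^2)).
     2:{ intros. unfold X. apply Cmod_mult_expi. }
     rewrite rsum_first. 
     assert (forall k c, rsum 0 k (fun _ => c) = INR k * c).
     { induction k; intros; simpl rsum; [simpl; ring|]. rewrite IHk, S_INR. ring. }
     rewrite H, INR_pow2, (rsum_shift 1). simpl pow. ring.
Qed.

Lemma key q : 1 <= q -> / q ^ 2 <= 2 / q - 2 / (q + 1).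
Proof. intros Hq.
 assert (E : 2 / q - 2 / (q + 1) - / q ^ 2 = (q - 1) / (q ^ 2 * (q + 1))) by (field; lra).
 assert (0 <= (q - 1) / (q ^ 2 * (q + 1))).
 { apply Rdiv_le_0_compat. lra. apply Rmult_lt_0_compat. apply pow_lt; lra. lra. }
 lra. Qed.

Lemma a_sq N m : (1 <= m)%nat -> (2 <= N)%nat ->
  a_coef N m ^ 2 = / INR m ^ 2 * / ln (INR N).
Proof. intros Hm HN. unfold a_coef.
 assert (HL : 0 < ln (INR N)). { assert (2 <= INR N) by (apply (le_INR 2); lia).
   assert (ln 2 <= ln (INR N)) by (apply ln_le; lra). assert (L2 := ln_lt_2). lra. }
 assert (0 < INR m) by (apply lt_0_INR; lia).
 assert (Hs := pow2_sqrt (ln (INR N)) (Rlt_le _ _ HL)).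
 assert (0 < sqrt (ln (INR N))) by (apply sqrt_lt_R0; auto).
 rewrite <- Hs at 2. field. split; lra. Qed.

Lemma tail p : forall n, rsum 0 p (fun l => / INR (p + n - l) ^ 2) <=
  2 / (INR n + 1) - 2 / (INR n + INR p + 1).
Proof. induction p; intros n.
 - simpl. replace (INR n + 0 + 1) with (INR n + 1) by ring. lra.
 - rewrite rsum_S, Nat.add_0_l.
   rewrite (rsum_ext_in 0 p _ (fun l => / INR (p + S n - l) ^ 2)).
   2:{ intros. f_equal. f_equal. f_equal. lia. }
   specialize (IHp (S n)). 
   replace (S p + n - p)%nat with (S n) by lia.
   rewrite !S_INR in *.
   assert (0 <= INR n) by apply pos_INR.
   assert (K := key (INR n + 1) ltac:(lra)).
   replace (INR n + 1 + INR p + 1) with (INR n + (INR p + 1) + 1) in IHp by ring.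
   replace (INR n + 1 + 1) with (INR n + 1 + 1) in IHp by ring.
   lra. Qed.

Lemma tail2 p n : rsum 0 p (fun l => / INR (p + n - l) ^ 2) <= 2 / (INR n + 1).
Proof. eapply Rle_trans. apply tail. assert (0 <= INR n) by apply pos_INR.
 assert (0 <= INR p) by apply pos_INR.
 assert (0 < 2 / (INR n + INR p + 1)) by (apply Rdiv_lt_0_compat; lra). lra. Qed.

Lemma ln_step x : 1 <= x -> / (x + 1) <= ln (x + 1) - ln x.
Proof. intros Hx.
 assert (H1 : x / (x + 1) <= exp (- / (x + 1))).
 { eapply Rle_trans; [|apply exp_ineq1_le]. apply Req_le. field. lra. }
 assert (H2 : ln (x / (x+1)) <= - / (x+1)).
 { rewrite <- (ln_exp (- / (x+1))). apply ln_le; auto. apply Rdiv_lt_0_compat; lra. }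
 unfold Rdiv in H2. rewrite ln_mult, ln_Rinv in H2; try lra.
 apply Rinv_0_lt_compat; lra. Qed.

Lemma harmonic P : (1 <= P)%nat -> rsum 0 P (fun n => / (INR n + 1)) <= 1 + ln (INR P).
Proof. induction P; intros HP. lia. destruct P.
 - simpl. rewrite ln_1. lra.
 - rewrite rsum_S, Nat.add_0_l. specialize (IHP ltac:(lia)).
   assert (K := ln_step (INR (S P))). rewrite (S_INR (S P)). 
   assert (1 <= INR (S P)) by (apply (le_INR 1); lia). specialize (K H). lra. Qed.

Lemma tri (w : nat -> R) : (forall l, 0 <= w l) -> forall P,
  rsum 0 P (fun n => rsum 0 n (fun l => / INR (n - l) ^ 2 * w l)) <=
  rsum 0 P (fun l => (2 - 2 / INR (P - l)) * w l).
Proof. intros Hw P. induction P.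
 - simpl. lra.
 - rewrite !rsum_S, !Nat.add_0_l. replace (S P - P)%nat with 1%nat by lia.
   replace (2 - 2 / INR 1) with 0 by (simpl; field).
   eapply Rle_trans. apply Rplus_le_compat_r. apply IHP.
   rewrite <- rsum_plus. 
   assert (rsum 0 P (fun i => (2 - 2 / INR (P - i)) * w i + / INR (P - i) ^ 2 * w i) <=
     rsum 0 P (fun l => (2 - 2 / INR (S P - l)) * w l)).
   { apply rsum_le_in. intros i Hi.
     replace (S P - i)%nat with (S (P - i)) by lia. rewrite S_INR.
     assert (1 <= INR (P - i)) by (apply (le_INR 1); lia).
     assert (K := key (INR (P - i)) H). specialize (Hw i). nra. }
   lra. Qed.

Lemma ln_facts N : (2 <= N)%nat -> 1 <= 2 * ln (INR N) /\ ln (INR N + 1) <= 2 * ln (INR N).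
Proof. intros HN. assert (2 <= INR N) by (apply (le_INR 2); lia).
 assert (ln 2 <= ln (INR N)) by (apply ln_le; lra).
 assert (L2 := ln_lt_2). split. lra.
 replace (2 * ln (INR N)) with (ln (INR N * INR N)) by (rewrite ln_mult; lra).
 apply ln_le; nra. Qed.

Lemma norm2_nonneg N e : 0 <= norm2 N e.
Proof. apply rsum_nonneg. intros; apply pow2_ge_0. Qed.

Lemma dlen_pos j : 0 < dlen j.
Proof. unfold dlen. apply Rinv_0_lt_compat, pow_lt; lra. Qed.

Lemma inner_zero N j k e : ~ (1 <= j <= N)%nat -> inner N (omega N j k) e = RtoC 0.
Proof. intros H. unfold inner. apply csum_zero. intros i _. unfold omega.
 destruct (Nat.leb 1 j) eqn:E1; destruct (Nat.leb j N) eqn:E2; simpl;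
 try (apply injective_projections; simpl; ring).
 apply Nat.leb_le in E1. apply Nat.leb_le in E2. lia. Qed.

Lemma inner_form N j k e : (1 <= j <= N)%nat -> inner N (omega N j k) e =
  csum j (fun l => Cmult (Cmult (RtoC (a_coef N (j - l))) (expi (2^l * dcenter j k))) (Cconj (e l))).
Proof. intros H. unfold inner. rewrite (csum_trunc N j); [|lia|].
 - apply csum_ext_in. intros i Hi. unfold omega.
   replace (Nat.leb 1 j) with true by (symmetry; apply Nat.leb_le; lia).
   replace (Nat.leb j N) with true by (symmetry; apply Nat.leb_le; lia).
   replace (Nat.ltb i j) with true by (symmetry; apply Nat.ltb_lt; lia). reflexivity.
 - intros i Hi. unfold omega.
   replace (Nat.ltb i j) with false by (symmetry; apply Nat.ltb_ge; lia).
   rewrite andb_false_r. apply injective_projections; simpl; ring. Qed.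

Lemma Cmod_sum_sq x y : Cmod (Cplus x y)^2 <= 2 * Cmod x ^2 + 2 * Cmod y ^2.
Proof. rewrite !Cmod_sq. destruct x as [x1 x2], y as [y1 y2]; simpl.
 assert (0 <= (x1-y1)^2) by apply pow2_ge_0. assert (0 <= (x2-y2)^2) by apply pow2_ge_0. nra. Qed.

Lemma Cmod_term a E z : Cmod E = 1 -> Cmod (Cmult (Cmult (RtoC a) E) z) = Rabs a * Cmod z.
Proof. intros H. rewrite !Cmod_mult, H, Cmod_R. ring. Qed.

Definition Lw N j0 n := rsum 0 j0 (fun l => a_coef N (j0 + n - l) ^ 2).
Definition Hw N e j0 n := rsum 0 n (fun l => a_coef N (n - l) ^ 2 * Cmod (e (j0 + l)%nat) ^ 2).
Definition Bn N e j0 n := if Nat.leb (j0 + n) N then 2 * (Lw N j0 n * norm2 N e + Hw N e j0 n) else 0.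

Lemma Bn_nonneg N e j0 n : 0 <= Bn N e j0 n.
Proof. unfold Bn. destruct (Nat.leb (j0+n) N); [|lra].
 assert (0 <= Lw N j0 n) by (apply rsum_nonneg; intros; apply pow2_ge_0).
 assert (0 <= Hw N e j0 n) by (apply rsum_nonneg; intros; apply Rmult_le_pos; apply pow2_ge_0).
 assert (0 <= norm2 N e) by apply norm2_nonneg. nra. Qed.

Lemma rank_bound N e j0 k0 n :
  rsum (k0 * 2^(j0+n-j0)) (2^(j0+n-j0))
    (fun k => Cmod (inner N (omega N (j0+n) k) e)^2 * dlen (j0+n))
  <= dlen j0 * Bn N e j0 n.
Proof. replace (j0+n-j0)%nat with n by lia.
 assert (HB := Bn_nonneg N e j0 n). assert (Hd := dlen_pos j0).
 destruct (le_lt_dec 1 (j0+n)) as [H1|H1]; [destruct (le_lt_dec (j0+n) N) as [H2|H2]|].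
 2,3: rewrite rsum_zero; [apply Rmult_le_pos; lra|];
      intros; rewrite inner_zero; [rewrite Cmod_0; simpl; ring|lia].
 unfold Bn. replace (Nat.leb (j0+n) N) with true by (symmetry; apply Nat.leb_le; lia).
 rewrite rsum_shift.
 set (f := fun k l => Cmult (Cmult (RtoC (a_coef N (j0 + n - l))) (expi (2^l * dcenter (j0+n) k))) (Cconj (e l))).
 set (low := fun k => csum j0 (f k)).
 set (high := fun k => csum n (fun l => f k (j0 + l)%nat)).
 set (w := fun l => Cmod (e l) ^ 2).
 assert (Hlow : forall k, Cmod (low k) ^ 2 <= Lw N j0 n * norm2 N e).
 { intros k. assert (Hc : Cmod (low k) <= rsum 0 j0 (fun l => Rabs (a_coef N (j0+n-l)) * Cmod (e l))).
   { eapply Rle_trans. apply Cmod_csum_le. apply Req_le. apply rsum_ext_in. intros. unfold f.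
     rewrite Cmod_term by apply Cmod_expi. rewrite Cmod_conj. reflexivity. }
   assert (0 <= Cmod (low k)) by apply Cmod_ge_0.
   eapply Rle_trans. apply pow_incr. split; [auto|exact Hc].
   eapply Rle_trans. apply rsum_CS. apply Rmult_le_compat.
   apply rsum_nonneg; intros; apply pow2_ge_0. apply rsum_nonneg; intros; apply pow2_ge_0.
   apply Req_le. apply rsum_ext_in. intros. apply pow2_abs.
   unfold norm2. apply rsum_mono_n. lia. intros; apply pow2_ge_0. }
 assert (Hhigh : rsum 0 (2^n) (fun r => Cmod (high (k0 * 2^n + r)%nat)^2) = 2^n * Hw N e j0 n).
 { set (b := fun l => Cmult (RtoC (a_coef N (n - l))) (Cconj (e (j0+l)%nat))).
   transitivity (rsum 0 (2^n) (fun r => Cmod (csum n (fun l => Cmult (b l)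
     (expi (2^l * ((INR (k0*2^n + r)%nat + /2) / 2^n)))))^2)).
   { apply rsum_ext_in. intros r _. f_equal. f_equal. unfold high. apply csum_ext_in. intros l Hl.
     unfold f, b. replace (j0 + n - (j0 + l))%nat with (n - l)%nat by lia.
     replace (2 ^ (j0 + l) * dcenter (j0 + n) (k0 * 2 ^ n + r)) with
        (2 ^ l * ((INR (k0 * 2 ^ n + r) + / 2) / 2 ^ n)).
     rewrite <- !Cmult_assoc. f_equal. apply Cmult_comm.
     unfold dcenter. rewrite !pow_add. field. split; apply pow_nonzero; lra. }
   rewrite parseval. f_equal. unfold Hw. apply rsum_ext_in. intros l _. unfold b.
   rewrite Cmod_mult, Cmod_R, Cmod_conj, Rpow_mult_distr, pow2_abs. reflexivity. }
 assert (Hconst : forall k c, rsum 0 k (fun _ => c) = INR k * c).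
 { induction k; intros; simpl rsum; [simpl; ring|]. rewrite IHk, S_INR. ring. }
 apply Rle_trans with (rsum 0 (2^n) (fun r => (2*(Lw N j0 n * norm2 N e) + 2*Cmod (high (k0*2^n+r)%nat)^2) * dlen (j0+n))).
 { apply rsum_le_in; intros r _.
   assert (Hi : inner N (omega N (j0 + n) (k0 * 2 ^ n + r)) e = Cplus (low (k0*2^n+r)%nat) (high (k0*2^n+r)%nat)).
   { rewrite inner_form by lia. exact (csum_split j0 n (f (k0*2^n+r)%nat)). }
   rewrite Hi. apply Rmult_le_compat_r. left; apply dlen_pos.
   eapply Rle_trans. apply Cmod_sum_sq.
   assert (H := Hlow (k0*2^n+r)%nat). lra. }
 rewrite (rsum_ext_in _ _ _ (fun r => (2*(Lw N j0 n * norm2 N e)) * dlen (j0+n) + (2 * dlen (j0+n)) * Cmod (high (k0*2^n+r)%nat)^2)).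
 2:{ intros; ring. }
 rewrite rsum_plus, !rsum_scal, Hhigh, Hconst, INR_pow2.
 assert (E : dlen (j0 + n) * 2^n = dlen j0).
 { unfold dlen. rewrite pow_add. field. split; apply pow_nonzero; lra. }
 apply Req_le. rewrite <- E. ring.
Qed.

Lemma sum_Lw N j0 P : (2 <= N)%nat -> (P <= S N)%nat ->
  rsum 0 P (Lw N j0) <= 8.
Proof. intros HN HP.
 destruct (ln_facts N HN) as [F1 F2]. set (L := ln (INR N)) in *.
 assert (HL : 0 < L) by lra.
 rewrite (rsum_ext_in 0 P _ (fun n => / L * rsum 0 j0 (fun l => / INR (j0 + n - l) ^ 2))).
 2:{ intros n _. unfold Lw. rewrite <- rsum_scal. apply rsum_ext_in. intros l Hl.
     rewrite a_sq by lia. fold L. ring. }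
 rewrite rsum_scal.
 assert (H1 : rsum 0 P (fun n => rsum 0 j0 (fun l => / INR (j0 + n - l) ^ 2)) <=
   2 * rsum 0 P (fun n => / (INR n + 1))).
 { rewrite <- rsum_scal. apply rsum_le_in. intros. eapply Rle_trans. apply tail2. unfold Rdiv. lra. }
 destruct P. simpl. assert (0 < / L) by (apply Rinv_0_lt_compat; auto). lra.
 assert (H2 := harmonic (S P) ltac:(lia)).
 assert (H3 : ln (INR (S P)) <= ln (INR N + 1)).
 { apply ln_le. apply lt_0_INR; lia. rewrite S_INR. assert (INR P <= INR N) by (apply le_INR; lia). lra. }
 assert (0 <= rsum 0 (S P) (fun n => / (INR n + 1))).
 { apply rsum_nonneg. intros. apply Rlt_le, Rinv_0_lt_compat. assert (0 <= INR i) by apply pos_INR. lra. }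
 assert (H4 : rsum 0 (S P) (fun n => rsum 0 j0 (fun l => / INR (j0 + n - l) ^ 2)) <= 8 * L) by lra.
 apply Rle_trans with (/ L * (8 * L)).
 apply Rmult_le_compat_l; [apply Rlt_le, Rinv_0_lt_compat; auto| auto].
 right. field. lra. Qed.

Lemma sum_Hw N e j0 : (2 <= N)%nat -> (j0 <= N)%nat ->
  rsum 0 (S (N - j0)) (Hw N e j0) <= 4 * norm2 N e.
Proof. intros HN Hj.
 destruct (ln_facts N HN) as [F1 F2]. set (L := ln (INR N)) in *.
 assert (HL : 0 < L) by lra.
 set (w := fun l => Cmod (e (j0 + l)%nat) ^ 2).
 assert (Hw0 : forall l, 0 <= w l) by (intros; apply pow2_ge_0).
 rewrite (rsum_ext_in 0 _ _ (fun n => / L * rsum 0 n (fun l => / INR (n - l) ^ 2 * w l))).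
 2:{ intros n _. unfold Hw. rewrite <- rsum_scal. apply rsum_ext_in. intros l Hl.
     rewrite a_sq by lia. fold L. unfold w. ring. }
 rewrite rsum_scal.
 assert (T := tri w Hw0 (S (N - j0))).
 rewrite (rsum_S 0 (N - j0) (fun l => (2 - 2 / INR (S (N - j0) - l)) * w l)), Nat.add_0_l in T. replace (S (N - j0) - (N - j0))%nat with 1%nat in T by lia.
 replace (2 - 2 / INR 1) with 0 in T by (simpl; field).
 assert (T2 : rsum 0 (N - j0) (fun l => (2 - 2 / INR (S (N - j0) - l)) * w l) <=
   2 * rsum 0 (N - j0) w).
 { rewrite <- rsum_scal. apply rsum_le_in. intros l Hl.
   assert (0 < 2 / INR (S (N - j0) - l)). { apply Rdiv_lt_0_compat. lra. apply lt_0_INR; lia. }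
   specialize (Hw0 l). set (q := 2 / INR (S (N - j0) - l)) in *.
   assert (0 <= q * w l) by (apply Rmult_le_pos; lra).
   assert ((2 - q) * w l = 2 * w l - q * w l) by ring. lra. }
 assert (T3 : rsum 0 (N - j0) w <= norm2 N e).
 { unfold w, norm2. rewrite <- (rsum_shift j0 (N - j0) (fun l => Cmod (e l) ^2)).
   replace N with (j0 + (N - j0))%nat at 2 by lia. rewrite rsum_split, Nat.add_0_l.
   assert (0 <= rsum 0 j0 (fun l => Cmod (e l) ^ 2)) by (apply rsum_nonneg; intros; apply pow2_ge_0).
   lra. }
 assert (HiL : / L <= 2).
 { apply Rle_trans with (/ (/ 2)). apply Rinv_le_contravar; lra. rewrite Rinv_inv. lra. }
 assert (0 <= rsum 0 (S (N - j0)) (fun n => rsum 0 n (fun l => / INR (n - l) ^ 2 * w l))).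
 { apply rsum_nonneg. intros. apply rsum_nonneg. intros. apply Rmult_le_pos; auto.
   apply Rlt_le, Rinv_0_lt_compat, pow_lt. apply lt_0_INR. lia. }
 assert (0 < / L) by (apply Rinv_0_lt_compat; auto).
 assert (HS : rsum 0 (S (N - j0)) (fun n => rsum 0 n (fun l => / INR (n - l) ^ 2 * w l)) <= 2 * norm2 N e) by lra.
 apply Rle_trans with (2 * (2 * norm2 N e)).
 apply Rmult_le_compat; auto; lra. lra. Qed.

Theorem lemma7 :
  exists Cst : R, 0 < Cst /\
    forall (N : nat), (2 <= N)%nat ->
    forall (j0 k0 : nat), (k0 < 2 ^ j0)%nat ->
    forall (e : nat -> C) (M : nat),
      carleson_partial N j0 k0 M e <= Cst * dlen j0 * norm2 N e.
Proof.
 exists 24. split; [lra|]. intros N HN j0 k0 Hk0 e M.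
 unfold carleson_partial. rewrite rsum_shift.
 apply Rle_trans with (rsum 0 M (fun n => dlen j0 * Bn N e j0 n)).
 { apply rsum_le_in; intros. apply rank_bound. }
 rewrite rsum_scal.
 assert (Hn := norm2_nonneg N e). assert (Hd := dlen_pos j0).
 assert (HB : rsum 0 M (Bn N e j0) <= 24 * norm2 N e).
 { destruct (le_lt_dec j0 N) as [Hj|Hj].
   - apply Rle_trans with (rsum 0 (S (N - j0)) (Bn N e j0)).
     { apply rsum_trunc. intros i Hi. unfold Bn.
       replace (Nat.leb (j0 + i) N) with false by (symmetry; apply Nat.leb_gt; lia). reflexivity.
       apply Bn_nonneg. }
     rewrite (rsum_ext_in 0 _ _ (fun n => (2 * norm2 N e) * Lw N j0 n + 2 * Hw N e j0 n)).
     2:{ intros n Hn'. unfold Bn. replace (Nat.leb (j0 + n) N) with true by (symmetry; apply Nat.leb_le; lia). ring. }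
     rewrite rsum_plus, !rsum_scal.
     assert (H1 := sum_Lw N j0 (S (N - j0)) HN ltac:(lia)).
     assert (H2 := sum_Hw N e j0 HN Hj). nra.
   - rewrite rsum_zero. lra. intros i _. unfold Bn.
     replace (Nat.leb (j0 + i) N) with false by (symmetry; apply Nat.leb_gt; lia). reflexivity. }
 apply Rle_trans with (dlen j0 * (24 * norm2 N e)).
 apply Rmult_le_compat_l; lra. right; ring.
Qed.
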